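(* The set of delay-insensitive gates $\{\textsf{MERGE},\textsf{FORK},\textsf{DUAL},\textsf{CROSS}\}$ can compute any Boolean function using a feed-forward planar circuit with dual-rail encoding.
   Context: Circuits transmit signals along wires with arbitrary (unbounded, unknown) delays; gates are delay-insensitive, i.e. they do not require simultaneity of inputs. The gates: \textsf{MERGE} has two input wires and one output wire and emits a signal on its output when a signal arrives on an input; at most one of its inputs is allowed to carry a signal. \textsf{FORK} has one input and two outputs and splits an incoming signal into two output copies. \textsf{DUAL} has two inputs and one output and produces an output signal once signals have arrived on both inputs. \textsf{CROSS} is a weak wire crossing of two wires, each signal passing straight through; simultaneous signals on both wires are prohibited. Dual-rail encoding represents each Boolean variable $\texttt{I}$ by two wires $\texttt{I}$ and $\neg\texttt{I}$: a signal is sent on wire $\texttt{I}$ if the value is true and on wire $\neg\texttt{I}$ if it is false (exactly one of the two carries a signal). A circuit is feed-forward if it contains no loops, and planar if its wires do not cross (other than through \textsf{CROSS} gates, which are themselves gates of the circuit). *)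

(* Defs.v *)
From mathcomp Require Import all_boot.
Set Implicit Arguments. Unset Strict Implicit. Unset Printing Implicit Defensive.

Inductive gate := MERGE | FORK | DUAL | CROSS.

(* A feed-forward planar circuit is described as a sequence of layers, drawn
   top to bottom in a strip.  The current cross-section of the strip is a row
   of wires (left to right).
   No other crossing of wires is possible, so the circuit is planar, and the
   order of layers makes it loop-free (feed-forward).

   Since the circuit is feed-forward and the delays are arbitrary and unknown,
   a wire carries at most one signal, and the behaviour of the circuit is
   captured by recording for each wire whether it (eventually) carries a
   signal.  The prohibited situations (signals on both inputs of a MERGE, or
   on both wires of a CROSS, which could be simultaneous under arbitrary
   delays) make the run fail (None). *)
Definition step (gi : gate * nat) (s : seq bool) : option (seq bool) :=
  let: (g, i) := gi in
  let a := nth false s i in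
  let b := nth false s i.+1 in
  match g with
  | FORK => if i < size s then Some (take i s ++ [:: a; a] ++ drop i.+1 s)
            else None
  | MERGE => if (i.+1 < size s) && ~~ (a && b)
             then Some (take i s ++ [:: a || b] ++ drop i.+2 s) else None
  | DUAL => if i.+1 < size s
            then Some (take i s ++ [:: a && b] ++ drop i.+2 s) else None
  | CROSS => if (i.+1 < size s) && ~~ (a && b)
             then Some (take i s ++ [:: b; a] ++ drop i.+2 s) else None
  end.

Definition circuit := seq (gate * nat).

Fixpoint run (c : circuit) (s : seq bool) : option (seq bool) :=
  match c with
  | [::] => Some s
  | gi :: c' => match step gi s with
                | Some s' => run c' s'
                | None => None
                end
  end.

(* Dual-rail encoding of an input vector: wires I1, ~I1, I2, ~I2, ..., In, ~In
   (left to right); wire I carries a signal iff the value is true. *)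
Definition dual_rail (n : nat) (x : n.-tuple bool) : seq bool :=
  flatten [seq [:: b; ~~ b] | b <- x].

Definition computes (n : nat) (f : n.-tuple bool -> bool) (c : circuit)
    (o1 o0 : nat) : Prop :=
  o1 != o0 /\
  forall x : n.-tuple bool, exists s, run c (dual_rail x) = Some s /\
    o1 < size s /\ o0 < size s /\
    nth false s o1 = f x /\ nth false s o0 = ~~ f x.

(* Main.v *)
Require Import Defs.
From mathcomp Require Import all_boot.
Set Implicit Arguments. Unset Strict Implicit.

Definition shift (c : circuit) k : circuit := [seq (gi.1, gi.2 + k) | gi <- c].

Lemma run_cat_some c1 c2 s s1 : run c1 s = Some s1 -> run (c1 ++ c2) s = run c2 s1.
Proof.
elim: c1 s => [|gi c IH] s /=; first by case=> ->.
case: (step gi s) => // s'; exact: IH.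
Qed.

Lemma step_shift g i p s s' : step (g, i) s = Some s' ->
  step (g, i + size p) (p ++ s) = Some (p ++ s').
Proof.
have Hn k : nth false (p ++ s) (k + size p) = nth false s k.
  by rewrite nth_cat ltnNge leq_addl /= addnK.
have Ht : take (i + size p) (p ++ s) = p ++ take i s.
  by rewrite take_cat ltnNge leq_addl /= addnK.
have Hd k : drop (k + size p) (p ++ s) = drop k s.
  by rewrite drop_cat ltnNge leq_addl /= addnK.
rewrite /step -!addSn !Hn !Hd Ht size_cat [size p + _]addnC !ltn_add2r.
rewrite !leq_add2r.
case: g => /=; case: ifP => // _ [<-]; by rewrite -catA.
Qed.

Lemma run_cons gi c s : run (gi :: c) s =
  match step gi s with Some s' => run c s' | None => None end.
Proof. by []. Qed.

Lemma run_shift c p s s' : run c s = Some s' ->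
  run (shift c (size p)) (p ++ s) = Some (p ++ s').
Proof.
elim: c s => [|[g i] c IH] s; first by case=> ->.
rewrite !run_cons.
case E: (step (g,i) s) => [s1|] // H.
rewrite (step_shift p E); exact: IH.
Qed.

Definition gadG : circuit := [:: (FORK,0); (DUAL,1); (CROSS,1); (DUAL,0)].

Lemma gadG_run u b rest :
  run gadG (u :: b :: ~~ b :: rest) = Some (u && ~~ b :: u && b :: rest).
Proof. rewrite /= drop0; case: u; case: b => //=; rewrite drop0. Qed.

Fixpoint movec k : circuit :=
  if k is k'.+1 then (CROSS, 0) :: shift (movec k') 1 else [::].

Lemma movec_run u Q r : all (fun q => ~~ (u && q)) Q ->
  run (movec (size Q)) (u :: Q ++ r) = Some (Q ++ u :: r).
Proof.
elim: Q => [|q Q IH] //= /andP [Hq HQ].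
rewrite /step /= Hq /=.
rewrite drop0; exact: (run_shift [:: q] (IH HQ)).
Qed.

Definition Pc i (b : bool) := flatten (nseq i [:: b; ~~ b]).

Fixpoint copyc k : circuit :=
  if k is k'.+1 then copyc k' ++ [:: (FORK,0); (FORK,2); (CROSS,1)] else [::].

Lemma copyc_run k b rest : run (copyc k) (b :: ~~ b :: rest) = Some (Pc k.+1 b ++ rest).
Proof.
elim: k => [|k IH] //=.
rewrite (run_cat_some _ IH) /=.
by rewrite drop0; case: (b) => /=.
Qed.

Definition prodF (b : bool) (H : seq bool) :=
  flatten [seq [:: h && ~~ b; h && b] | h <- H].

Fixpoint absorbB (i k : nat) : circuit :=
  if i is i'.+1 then shift (movec k) i' ++ shift gadG (i' + k) ++ absorbB i' (k + 2)
  else [::].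

Lemma count1_all u Q : count id (u :: Q) <= 1 -> all (fun q => ~~ (u && q)) Q.
Proof.
elim: Q => [|q Q IH] //=.
case: u IH => /=; case: q => //= IH H.
by elim: (Q) {IH H}.
Qed.

Lemma absorbB_run b H Q rest : count id (H ++ Q) <= 1 ->
  run (absorbB (size H) (size Q)) (H ++ Q ++ Pc (size H) b ++ rest)
  = Some (Q ++ prodF b (rev H) ++ rest).
Proof.
elim/last_ind: H Q => [|H h IH] Q Hc; first by [].
have Hall : all (fun q => ~~ (h && q)) Q.
  apply: count1_all; move: Hc; rewrite cat_rcons count_cat => Hc.
  by apply: leq_trans Hc; exact: leq_addl.
rewrite size_rcons [absorbB _.+1 _]/= cat_rcons.
rewrite (run_cat_some _ (run_shift H (movec_run _ Hall))).
rewrite [Pc _.+1 b]/= catA -size_cat.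
rewrite (run_cat_some _ (run_shift (H ++ Q) (gadG_run h b _))).
have -> : (H ++ Q) ++ [:: h && ~~ b, h && b & Pc (size H) b ++ rest]
  = H ++ (Q ++ [:: h && ~~ b; h && b]) ++ Pc (size H) b ++ rest by rewrite -!catA.
have -> : size Q + 2 = size (Q ++ [:: h && ~~ b; h && b]) by rewrite size_cat.
rewrite IH; last first.
  move: Hc; rewrite cat_rcons !count_cat /=.
  by case: (h); case: (b) => /=; rewrite ?addn0 ?add0n ?[count id Q + 1]addnC.
by rewrite rev_rcons /= -catA.
Qed.

Definition absorb m : circuit := shift (copyc m.-1) m ++ absorbB m 0.

Lemma absorb_run b H rest : 0 < size H -> count id H <= 1 ->
  run (absorb (size H)) (H ++ b :: ~~ b :: rest) = Some (prodF b (rev H) ++ rest).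
Proof.
move=> Hs Hc.
rewrite /absorb (run_cat_some _ (run_shift H (copyc_run (size H).-1 b rest))).
rewrite prednK //.
have := @absorbB_run b H [::] rest; rewrite cats0 => -> //.
Qed.

Definition absorbF (H : seq bool) b := prodF b (rev H).

Fixpoint decc m r : circuit := if r is r'.+1 then absorb m ++ decc m.*2 r' else [::].

Definition drl (r : seq bool) := flatten [seq [:: b; ~~ b] | b <- r].

Lemma size_prodF b s : size (prodF b s) = (size s).*2.
Proof. by elim: s => //= h s IH; rewrite IH doubleS. Qed.

Lemma count_prodF b s : count id (prodF b s) = count id s.
Proof. elim: s => //= h s IH; rewrite IH; by case: h; case: (b). Qed.

Lemma decc_run r H rest : 0 < size H -> count id H <= 1 ->
  run (decc (size H) (size r)) (H ++ drl r ++ rest) = Some (foldl absorbF H r ++ rest).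
Proof.
elim: r H => [|b r IH] H Hs Hc; first by [].
rewrite [decc _ _]/= [drl _]/= /=.
rewrite (run_cat_some _ (absorb_run b (drl r ++ rest) Hs Hc)).
have -> : (size H).*2 = size (absorbF H b) by rewrite /absorbF size_prodF size_rev.
apply: IH.
  by rewrite /absorbF size_prodF size_rev double_gt0.
by rewrite /absorbF count_prodF count_rev.
Qed.

Lemma count_foldl r H : count id (foldl absorbF H r) = count id H.
Proof. elim: r H => //= b r IH H; by rewrite IH /absorbF count_prodF count_rev. Qed.

Definition absorbE (E : seq (seq bool)) :=
  flatten [seq [:: rcons e false; rcons e true] | e <- rev E].

Lemma prodF_map b y s : prodF b [seq e == y | e <- s] =
  [seq e == rcons y b | e <- flatten [seq [:: rcons e false; rcons e true] | e <- s]].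
Proof.
elim: s => //= e s IH; move: IH; rewrite /prodF /= => ->; rewrite !eqseq_rcons.
by case: b; rewrite /= ?andbT ?andbF.
Qed.

Lemma labels r H E y : H = [seq e == y | e <- E] ->
  foldl absorbF H r = [seq e == y ++ r | e <- iter (size r) absorbE E].
Proof.
elim: r H E y => [|b r IH] H E y HE /=; first by rewrite cats0.
rewrite -iterS iterSr -cat_rcons; apply: IH.
by rewrite HE /absorbF -map_rev prodF_map.
Qed.

Fixpoint p2 (ms : seq bool) : circuit :=
  if ms is m :: ms' then (if m then [:: (CROSS,1); (MERGE,0)] else [:: (MERGE,1)]) ++ p2 ms'
  else [::].

Fixpoint orS (ms l : seq bool) := match ms, l with
  | m :: ms', h :: l' => (m && h) || orS ms' l' | _, _ => false end.
Fixpoint orNS (ms l : seq bool) := match ms, l with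
  | m :: ms', h :: l' => (~~ m && h) || orNS ms' l' | _, _ => false end.

Lemma p2_run ms l o no : size ms = size l -> count id [:: o, no & l] <= 1 ->
  run (p2 ms) [:: o, no & l] = Some [:: o || orS ms l; no || orNS ms l].
Proof.
elim: ms l o no => [|m ms IH] [|h l] o no //= Hs Hc.
  by rewrite !orbF.
case: m; case: o Hc; case: no; case: h => //= Hc; rewrite ?drop0.
all: rewrite IH; [ by [] | by case: Hs | by move: Hc; rewrite /= ?add0n ?add1n ?addn0 ].
Qed.

Definition pre : circuit := [:: (FORK,0); (FORK,2); (DUAL,1); (CROSS,0); (FORK,0)].

Lemma pre_run x rest : run pre (x :: ~~ x :: rest) = Some [:: false, false, x, ~~ x & rest].
Proof. by case: x => /=; rewrite drop0. Qed.

Definition E0 : seq (seq bool) := [:: [:: true]; [:: false]].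
Definition EE n' := iter n' absorbE E0.

Definition Cf (g : seq bool -> bool) n' : circuit :=
  pre ++ shift (decc 2 n') 2 ++ p2 [seq g e | e <- EE n'].

Lemma orS_map (g : seq bool -> bool) x E :
  orS [seq g e | e <- E] [seq e == x | e <- E] = g x && (x \in E).
Proof.
elim: E => [|e E IH] /=; first by rewrite andbF.
rewrite IH in_cons.
case: eqP => [->|ne] /=.
  by rewrite eqxx andbT; case: (g x).
by rewrite andbF (_ : (x == e) = false) //; apply/eqP => H; apply: ne; rewrite H.
Qed.

Lemma orNS_map (g : seq bool -> bool) x E :
  orNS [seq g e | e <- E] [seq e == x | e <- E] = ~~ g x && (x \in E).
Proof.
elim: E => [|e E IH] /=; first by rewrite andbF.
rewrite IH in_cons.
case: eqP => [->|ne] /=.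
  by rewrite eqxx andbT; case: (g x).
by rewrite andbF (_ : (x == e) = false) //; apply/eqP => H; apply: ne; rewrite H.
Qed.

Lemma count_in x (E : seq (seq bool)) : 0 < count id [seq e == x | e <- E] -> x \in E.
Proof.
elim: E => //= e E IH; rewrite in_cons.
case: eqP => [->|_] /=; first by rewrite eqxx.
by rewrite add0n => /IH ->; rewrite orbT.
Qed.

Lemma main_seq (g : seq bool -> bool) x1 r :
  run (Cf g (size r)) (drl (x1 :: r)) = Some [:: g (x1 :: r); ~~ g (x1 :: r)].
Proof.
rewrite /Cf [drl _]/= (run_cat_some _ (pre_run x1 (drl r))).
have Hd := @decc_run r [:: x1; ~~ x1] [::] erefl.
have Hc : count id [:: x1; ~~ x1] <= 1 by case: (x1).
move: (run_shift [:: false; false] (Hd Hc)); rewrite !cats0 /= => H.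
rewrite (run_cat_some _ H).
have HL := @labels r [:: x1; ~~ x1] E0 [:: x1].
rewrite HL; last by case: (x1).
have Hcnt : count id [seq e == x1 :: r | e <- EE (size r)] = 1.
  by rewrite -HL ?count_foldl; case: (x1).
rewrite p2_run; last by rewrite /= Hcnt.
  have Hin : (x1 :: r) \in EE (size r) by apply: count_in; rewrite Hcnt.
  by rewrite /= orS_map orNS_map Hin !andbT.
by rewrite !size_map.
Qed.
Unset Implicit Arguments.

Theorem mainTheorem9 (n : nat) (f : n.-tuple bool -> bool) :
  0 < n -> exists (c : circuit) (o1 o0 : nat), computes f c o1 o0.
Proof.
case: n f => [//|n'] f _.
pose g := fun e : seq bool => f (insubd (nseq_tuple n'.+1 false) e).
exists (Cf g n'), 0, 1; split => // x.
have Hs := size_tuple x.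
have Hg : g (tval x) = f x by rewrite /g (valKd _ x).
rewrite /dual_rail.
move: Hg Hs; case: (tval x) => [|x1 r] //= Hg [Hs].
rewrite -Hs.
have := main_seq g x1 r; rewrite /drl /= => ->.
by eexists; split; first reflexivity; rewrite Hg.
Qed.
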